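(* Let $q\in\mathbb{Z}\setminus\{0\}$ and $G=BS(1,q)=\langle a,b\mid aba^{-1}=b^q\rangle$. Let $\varepsilon\colon G\to\mathbb{Z}$ be the homomorphism with $\varepsilon(a)=1$, $\varepsilon(b)=0$, and let $\iota\colon\ker\varepsilon\to\mathbb{Z}[1/q]$ be the group isomorphism with $\iota(b)=1$ (so $\iota(a^{-m}ba^{m})=q^{-m}$). Define $P_1=\{g:\varepsilon(g)>0\}\cup\{g\in\ker\varepsilon:\iota(g)>0\}$, $P_2=\{g:\varepsilon(g)<0\}\cup\{g\in\ker\varepsilon:\iota(g)>0\}$, $P_3=P_1^{-1}$ and $P_4=P_2^{-1}$. Then for each $i\in\{1,2,3,4\}$ there is a one-counter language $\mathcal{L}_i\subseteq\{a,a^{-1},b,b^{-1}\}^*$ whose image under the natural evaluation map onto $G$ is $P_i$.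
   Context: $\mathbb{Z}[1/q]$ is the smallest subring of $\mathbb{Q}$ containing $\mathbb{Z}$ and $1/q$, ordered as a subset of $\mathbb{R}$. A one-counter language is a language accepted by a nondeterministic pushdown automaton whose stack alphabet consists of a single symbol. The evaluation map sends a word in $a^{\pm1},b^{\pm1}$ to the corresponding product in $G$. *)

(* Defs.v *)
From HB Require Import structures.
From mathcomp Require Import all_boot all_order all_algebra.
Set Implicit Arguments. Unset Strict Implicit. Unset Printing Implicit Defensive.
Import Order.TTheory GRing.Theory Num.Theory.
Local Open Scope ring_scope.

(** Alphabet {a, a^-1, b, b^-1}. *)
Inductive letter := La | LA | Lb | LB.

Definition letter_code (x : letter) : nat :=
  match x with La => 0 | LA => 1 | Lb => 2 | LB => 3 end%N.
Definition letter_decode (n : nat) : option letter :=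
  match n with 0 => Some La | 1 => Some LA | 2 => Some Lb | 3 => Some LB | _ => None end%N.
Lemma letter_codeK : pcancel letter_code letter_decode.
Proof. by case. Qed.
HB.instance Definition _ := Equality.copy letter (pcan_type letter_codeK).

Definition word := seq letter.

Definition linv (x : letter) : letter :=
  match x with La => LA | LA => La | Lb => LB | LB => Lb end.
Definition winv (w : word) : word := rev (map linv w).

Definition bpow (q : int) : word :=
  if (0 <= q) then nseq `|q|%N Lb else nseq `|q|%N LB.

(** Equality in G = BS(1,q) = < a, b | a b a^-1 = b^q >: the congruence on
    words generated by free reduction and the defining relator. *)
Inductive bs_eq (q : int) : word -> word -> Prop :=
| bs_refl w : bs_eq q w w
| bs_sym u v : bs_eq q u v -> bs_eq q v u
| bs_trans u v w : bs_eq q u v -> bs_eq q v w -> bs_eq q u w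
| bs_free u v x : bs_eq q (u ++ x :: linv x :: v) (u ++ v)
| bs_rel u v : bs_eq q (u ++ [:: La; Lb; LA] ++ v) (u ++ bpow q ++ v).

Definition eps_letter (x : letter) : int :=
  match x with La => 1 | LA => -1 | _ => 0 end.
Definition eps (w : word) : int := \sum_(x <- w) eps_letter x.

(** Affine model: (k, r) represents x |-> q^k x + r; a |-> (1,0), b |-> (0,1).
    Its translation part restricted to ker eps is the isomorphism
    iota : ker eps -> Z[1/q] with iota(b) = 1 (so iota(a^-m b a^m) = q^-m). *)
Definition aff_mul (q : int) (g h : int * rat) : int * rat :=
  (g.1 + h.1, (q%:~R : rat) ^ g.1 * h.2 + g.2).
Definition aff_letter (x : letter) : int * rat :=
  match x with La => (1, 0) | LA => (-1, 0) | Lb => (0, 1) | LB => (0, -1) end.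
Definition aff (q : int) (w : word) : int * rat :=
  foldr (fun x g => aff_mul q (aff_letter x) g) (0, 0) w.
Definition iota (q : int) (w : word) : rat := (aff q w).2.

(** the four sets P_1..P_4, as predicates on words (invariant under bs_eq) *)
Definition P1 (q : int) (w : word) : bool :=
  (0 < eps w) || ((eps w == 0) && (0 < iota q w)).
Definition P2 (q : int) (w : word) : bool :=
  (eps w < 0) || ((eps w == 0) && (0 < iota q w)).
Definition P3 (q : int) (w : word) : bool := P1 q (winv w).
Definition P4 (q : int) (w : word) : bool := P2 q (winv w).

(** One-counter automata: nondeterministic pushdown automata whose stack
    alphabet is a single symbol X (stack = a counter), in the standard sense
    where a move may depend on whether the stack is empty (equivalently, a
    bottom-of-stack marker).  A transition (p, x, z, p', n): in state p,
    reading x (None = epsilon move), when (counter == 0) = z, go to p',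
    popping the top X (if any) and pushing n copies of X. *)
Record OCA := {
  oca_state : finType;
  oca_init : oca_state;
  oca_final : pred oca_state;
  oca_trans : seq (oca_state * option letter * bool * oca_state * nat)
}.

Definition oca_step (A : OCA) (p : oca_state A) (c : nat) (x : option letter)
    (p' : oca_state A) (c' : nat) : Prop :=
  exists n, (p, x, (c == 0)%N, p', n) \in @oca_trans A /\
            c' = (if (c == 0)%N then n else c.-1 + n)%N.

Inductive oca_reach (A : OCA) :
    oca_state A -> nat -> word -> oca_state A -> nat -> Prop :=
| reach_refl p c : oca_reach p c [::] p c
| reach_eps p c p' c' w r d :
    oca_step p c None p' c' -> oca_reach p' c' w r d -> oca_reach p c w r d
| reach_read p c x p' c' w r d :
    oca_step p c (Some x) p' c' -> oca_reach p' c' w r d ->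
    oca_reach p c (x :: w) r d.

Definition oca_accepts (A : OCA) (w : word) : Prop :=
  exists r d, @oca_reach A (@oca_init A) 0 w r d /\ @oca_final A r.

Definition one_counter (L : word -> Prop) : Prop :=
  exists A : OCA, forall w, L w <-> oca_accepts A w.

Definition image_is (q : int) (L : word -> Prop) (P : word -> bool) : Prop :=
  forall w : word, (exists2 w', L w' & bs_eq q w' w) <-> P w.

(* Main.v *)
From HB Require Import structures.
Require Import Defs.
From mathcomp Require Import all_boot all_order all_algebra.
From mathcomp Require Import zify ring lra.
Import Order.TTheory GRing.Theory Num.Theory.
Local Open Scope ring_scope.
Set Implicit Arguments. Unset Strict Implicit.

Section Aff.
Variable q : int.
Hypothesis hq : q != 0.
Local Notation Q := (q%:~R : rat).
Lemma Qn0 : Q != 0. Proof. by rewrite intr_eq0. Qed.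

Lemma aff_mulA g h k : aff_mul q (aff_mul q g h) k = aff_mul q g (aff_mul q h k).
Proof.
rewrite /aff_mul /=; congr pair; first by rewrite addrA.
rewrite expfzDr ?Qn0 //; ring.
Qed.

Lemma aff_mul1 h : aff_mul q (0, 0) h = h.
Proof. by case: h => a b; rewrite /aff_mul /= add0r expr0z mul1r addr0. Qed.

Lemma aff_cat u v : aff q (u ++ v) = aff_mul q (aff q u) (aff q v).
Proof.
elim: u => [|x u IH] /=; first by rewrite aff_mul1.
by rewrite IH aff_mulA.
Qed.

Lemma aff_letter_inv x h :
  aff_mul q (aff_letter x) (aff_mul q (aff_letter (linv x)) h) = h.
Proof.
case: h => a b; case: x; rewrite /aff_mul /=.
- rewrite expr1z exprN1 !addr0 mulrA mulfV ?Qn0 // mul1r; congr pair; lia.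
- rewrite expr1z exprN1 !addr0 mulrA mulVf ?Qn0 // mul1r; congr pair; lia.
- by rewrite !expr0z !mul1r !add0r subrK.
- by rewrite !expr0z !mul1r !add0r addrK.
Qed.

Lemma aff_bwP (k : nat) : aff q (nseq k Lb) = (0, k%:~R).
Proof.
elim: k => [//|k IH] /=; rewrite IH /aff_mul /= expr0z mul1r add0r.
by rewrite -[in RHS]addn1 PoszD intrD.
Qed.

Lemma aff_bwN (k : nat) : aff q (nseq k LB) = (0, - k%:~R).
Proof.
elim: k => [|k IH] /=; first by rewrite oppr0.
rewrite IH /aff_mul /= expr0z mul1r add0r.
by rewrite -[in RHS]addn1 PoszD intrD opprD.
Qed.

Lemma aff_bw n : aff q (bpow n) = (0, n%:~R).
Proof.
rewrite /bpow; case: ifP => h.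
  by rewrite aff_bwP gez0_abs.
by rewrite aff_bwN ltz0_abs ?mulrNz ?opprK // ltNge h.
Qed.

Lemma aff_rel : aff q [:: La; Lb; LA] = (0, Q).
Proof.
rewrite /aff /= /aff_mul /= !expr0z expr1z exprN1; congr pair.
ring.
Qed.

Lemma aff_bs u v : bs_eq q u v -> aff q u = aff q v.
Proof.
elim=> {u v} //.
- by move=> u v w _ -> _ ->.
- by move=> u v x; rewrite !aff_cat /= aff_letter_inv.
- by move=> u v; rewrite !aff_cat aff_rel aff_bw.
Qed.

Lemma eps_aff w : eps w = (aff q w).1.
Proof.
elim: w => [|x w IH]; first by rewrite /eps big_nil.
by rewrite /eps big_cons -/(eps w) IH /=; case: x.
Qed.

Lemma aff_nA m : aff q (nseq m LA) = (- (m%:Z), 0).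
Proof.
elim: m => [//|m IH] /=; rewrite IH /aff_mul /= mulr0 addr0; congr pair; lia.
Qed.

Lemma aff_na m : aff q (nseq m La) = (m%:Z, 0).
Proof.
elim: m => [//|m IH] /=; rewrite IH /aff_mul /= mulr0 addr0; congr pair; lia.
Qed.

Definition nfw m n j := nseq m LA ++ bpow n ++ nseq j La.

Lemma aff_nfw m n j : aff q (nfw m n j) = (j%:Z - m%:Z, Q ^ (- (m%:Z)) * n%:~R).
Proof.
rewrite /nfw !aff_cat aff_nA aff_bw aff_na /aff_mul /=.
congr pair; first lia.
by rewrite !expr0z !mulr0 !addr0 ?mul1r ?mulr1; rewrite ?opprK ?addr0 ?mulr0 ?addr0 ?mulr1 ?expr0z; try ring.
Qed.
End Aff.

Section Words.
Variable q : int.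
Local Notation "u ~ v" := (bs_eq q u v) (at level 70).

Lemma bs_catl s u v : u ~ v -> s ++ u ~ s ++ v.
Proof.
elim=> {u v}.
- by move=> w; apply: bs_refl.
- by move=> u v _ H; apply: bs_sym.
- by move=> u v w _ H1 _ H2; apply: bs_trans H2.
- by move=> u v x; rewrite !catA; apply: bs_free.
- by move=> u v; rewrite !catA -(catA _ [:: La; Lb; LA]) -(catA _ (bpow q)); apply: bs_rel.
Qed.

Lemma bs_catr t u v : u ~ v -> u ++ t ~ v ++ t.
Proof.
elim=> {u v}.
- by move=> w; apply: bs_refl.
- by move=> u v _ H; apply: bs_sym.
- by move=> u v w _ H1 _ H2; apply: bs_trans H2.
- by move=> u v x; rewrite -!catA /=; apply: bs_free.
- by move=> u v; rewrite -!catA; apply: bs_rel.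
Qed.

Lemma bs_cat u u' v v' : u ~ u' -> v ~ v' -> u ++ v ~ u' ++ v'.
Proof. by move=> H1 H2; apply: bs_trans (bs_catr _ H1) (bs_catl _ H2). Qed.

Lemma bs_cons x u v : u ~ v -> x :: u ~ x :: v.
Proof. exact: (bs_catl [:: x]). Qed.

Lemma bs_canc x v : x :: linv x :: v ~ v.
Proof. exact: (bs_free q [::]). Qed.

Lemma nseq_rcons (T : Type) m (x : T) : nseq m x ++ [:: x] = nseq m.+1 x.
Proof. by rewrite -[m.+1]addn1 nseqD. Qed.

Lemma bpowP (k : nat) : bpow k = nseq k Lb.
Proof. by []. Qed.

Lemma bpowN (k : nat) : bpow (- k%:Z) = nseq k LB.
Proof. by case: k. Qed.

Lemma bw_bB (a b : nat) : nseq a Lb ++ nseq b LB ~ bpow (a%:Z - b%:Z).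
Proof.
elim: a b => [|a IH] [|b].
- exact: bs_refl.
- by rewrite sub0r bpowN; apply: bs_refl.
- by rewrite /= cats0 subr0; apply: bs_refl.
- rewrite -nseq_rcons -catA /=.
  apply: bs_trans (bs_catl _ (bs_canc Lb _)) _.
  have -> : a.+1%:Z - b.+1%:Z = a%:Z - b%:Z by lia.
  exact: IH.
Qed.

Lemma bw_Bb (a b : nat) : nseq a LB ++ nseq b Lb ~ bpow (b%:Z - a%:Z).
Proof.
elim: a b => [|a IH] [|b].
- exact: bs_refl.
- by rewrite subr0; apply: bs_refl.
- by rewrite /= cats0 sub0r bpowN; apply: bs_refl.
- rewrite -nseq_rcons -catA /=.
  apply: bs_trans (bs_catl _ (bs_canc LB _)) _.
  have -> : b.+1%:Z - a.+1%:Z = b%:Z - a%:Z by lia.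
  exact: IH.
Qed.

Lemma int_cases (x : int) : exists k : nat, x = k%:Z \/ x = - k%:Z.
Proof. case: x => k; first by exists k; left. by exists k.+1; right; rewrite NegzE. Qed.

Lemma bw_add x y : bpow x ++ bpow y ~ bpow (x + y).
Proof.
have [a [->|->]] := int_cases x; have [b [->|->]] := int_cases y.
- by rewrite -PoszD !bpowP -nseqD; apply: bs_refl.
- by rewrite bpowP bpowN; apply: bw_bB.
- by rewrite bpowP bpowN addrC; apply: bw_Bb.
- by rewrite -opprD -PoszD !bpowN -nseqD; apply: bs_refl.
Qed.

Lemma bw0 : bpow 0 = [::]. Proof. by []. Qed.

Lemma bw_inv x : bpow (- x) ++ bpow x ~ [::].
Proof. by rewrite -bw0 -(addNr x); apply: bw_add. Qed.

Lemma rel_b : [:: La; Lb] ~ bpow q ++ [:: La].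
Proof.
apply: bs_trans (bs_sym (bs_free q [:: La; Lb] [::] LA)) _.
exact: (bs_rel q [::] [:: La]).
Qed.

Lemma rel_B : [:: La; LB] ~ bpow (- q) ++ [:: La].
Proof.
apply: bs_trans (bs_sym (bs_free q [:: La; LB] [::] LA)) _.
change (bs_eq q ([:: La; LB; LA] ++ [:: La]) (bpow (- q) ++ [:: La])).
apply: bs_catr.
apply: bs_trans (bs_sym (bs_catr [:: La; LB; LA] (bw_inv q))) _.
rewrite -catA.
apply: bs_trans (bs_catl _ (bs_sym (bs_rel q [::] [:: La; LB; LA]))) _.
rewrite /=.
apply: bs_trans (bs_catl _ (bs_free q [:: La; Lb] [:: LB; LA] LA)) _.
apply: bs_trans (bs_catl _ (bs_free q [:: La] [:: LA] Lb)) _.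
have H := bs_catl (bpow (- q)) (bs_free q [::] [::] La); rewrite /= cats0 in H.
exact: H.
Qed.

Lemma rel_bw n : La :: bpow n ~ bpow (q * n) ++ [:: La].
Proof.
have [k [->|->]] := int_cases n.
- elim: k => [|k IH]; first by rewrite mulr0; apply: bs_refl.
  rewrite bpowP /= -[La :: Lb :: _]/([:: La; Lb] ++ nseq k Lb).
  apply: bs_trans (bs_catr _ rel_b) _.
  rewrite -catA /=.
  apply: bs_trans (bs_catl _ IH) _.
  rewrite catA; apply: bs_catr.
  have -> : q * k.+1%:Z = q + q * k by lia.
  exact: bw_add.
- elim: k => [|k IH]; first by rewrite oppr0 mulr0; apply: bs_refl.
  rewrite bpowN /= -[La :: LB :: _]/([:: La; LB] ++ nseq k LB).
  apply: bs_trans (bs_catr _ rel_B) _.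
  rewrite -catA /= -bpowN.
  apply: bs_trans (bs_catl _ IH) _.
  rewrite catA; apply: bs_catr.
  have -> : q * - k.+1%:Z = - q + q * - k%:Z by lia.
  exact: bw_add.
Qed.

Lemma conj_bw n : bpow n ~ LA :: bpow (q * n) ++ [:: La].
Proof.
apply: bs_trans (bs_sym (bs_canc LA _)) _.
exact: bs_cons (rel_bw n).
Qed.

Lemma conj_bw_iter m n : bpow n ~ nseq m LA ++ bpow (q ^+ m * n) ++ nseq m La.
Proof.
elim: m n => [|m IH] n; first by rewrite /= expr0 mul1r cats0; apply: bs_refl.
apply: bs_trans (conj_bw n) _.
rewrite /=; apply: bs_cons.
apply: bs_trans (bs_catr _ (IH (q * n))) _.
rewrite -!catA nseq_rcons exprSr -mulrA; exact: bs_refl.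
Qed.

Lemma canc_aA m s : nseq m La ++ nseq m LA ++ s ~ s.
Proof.
elim: m => [|m IH]; first exact: bs_refl.
rewrite -nseq_rcons -catA /=.
apply: bs_trans (bs_catl _ (bs_canc La _)) _; exact: IH.
Qed.

Lemma nf_exists w : exists m n j, w ~ nfw m n j.
Proof.
elim: w => [|x w [m [n [j IH]]]]; first by exists 0%N, 0, 0%N; apply: bs_refl.
have H := bs_cons x IH.
case: x H => H.
- case: m IH H => [|m] IH H.
  + exists 0%N, (q * n), j.+1; apply: bs_trans H _.
    rewrite /nfw /= -[La :: _]/((La :: bpow n) ++ nseq j La).
    apply: bs_trans (bs_catr _ (rel_bw n)) _.
    by rewrite -catA; apply: bs_refl.
  + exists m, n, j; apply: bs_trans H _; exact: bs_canc.
- exists m.+1, n, j; exact: H.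
- exists m, (q ^+ m + n), j; apply: bs_trans H _.
  rewrite -[Lb :: _]/(bpow 1 ++ nfw m n j).
  apply: bs_trans (bs_catr _ (conj_bw_iter m 1)) _.
  rewrite mulr1 /nfw -!catA.
  apply: bs_trans (bs_catl _ (bs_catl _ (canc_aA _ _))) _.
  rewrite !catA; apply: bs_catr; rewrite -catA; apply: bs_catl; exact: bw_add.
- exists m, (- q ^+ m + n), j; apply: bs_trans H _.
  rewrite -[LB :: _]/(bpow (-1) ++ nfw m n j).
  apply: bs_trans (bs_catr _ (conj_bw_iter m (-1))) _.
  rewrite mulrN1 /nfw -!catA.
  apply: bs_trans (bs_catl _ (bs_catl _ (canc_aA _ _))) _.
  rewrite !catA; apply: bs_catr; rewrite -catA; apply: bs_catl; exact: bw_add.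
Qed.

Lemma nf_even w : exists m n j, ~~ odd m /\ w ~ nfw m n j.
Proof.
have [m [n [j H]]] := nf_exists w.
case Ho: (odd m); last by exists m, n, j; rewrite Ho.
exists m.+1, (q * n), j.+1; split; first by rewrite /= Ho.
apply: bs_trans H _; rewrite /nfw.
apply: bs_trans (bs_catl _ (bs_catr (nseq j La) (conj_bw n))) _.
rewrite -nseq_rcons -catA /= -catA /=; exact: bs_refl.
Qed.
End Words.

Unset Implicit Arguments.

Definition Pg (q : int) (sep sip : bool) (w : word) : bool :=
  (if sep then 0 < eps w else eps w < 0) ||
  ((eps w == 0) && (if sip then 0 < Defs.iota q w else Defs.iota q w < 0)).

Section PP.
Variable q : int.
Hypothesis hq : q != 0.

Lemma Pg_bs sep sip u v : bs_eq q u v -> Pg q sep sip u = Pg q sep sip v.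
Proof. by move=> H; rewrite /Pg /Defs.iota !(eps_aff q) (aff_bs hq H). Qed.

Lemma linvK x : linv (linv x) = x. Proof. by case: x. Qed.

Lemma winv_canc w : bs_eq q (winv w ++ w) [::].
Proof.
elim: w => [|x w IH]; first exact: bs_refl.
rewrite /winv map_cons rev_cons -/(winv w) -cats1 -catA /=.
apply: bs_trans (bs_catl _ _) IH.
have := @bs_canc q (linv x) w; by rewrite linvK.
Qed.

Lemma P3E w : P3 q w = Pg q false false w.
Proof.
have := aff_bs hq (winv_canc w); rewrite aff_cat //=.
rewrite /P3 /P1 /Pg /Defs.iota !(eps_aff q).
case: (aff q (winv w)) => g1 g2; case: (aff q w) => k r; rewrite /aff_mul /=.
case=> H1 H2; have Hg : g1 = - k by lia.
subst g1; case: (eqVneq k 0) => [Hk|Hk].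
  subst k; move: H2; rewrite oppr0 expr0z mul1r /= => H2.
  have -> : g2 = - r by lra.
  by rewrite oppr_gt0.
rewrite oppr_gt0 oppr_eq0 (negbTE Hk) /=.
by rewrite ?andbF ?orbF ?andFb ?orbF.
Qed.

Lemma P4E w : P4 q w = Pg q true false w.
Proof.
have := aff_bs hq (winv_canc w); rewrite aff_cat //=.
rewrite /P4 /P2 /Pg /Defs.iota !(eps_aff q).
case: (aff q (winv w)) => g1 g2; case: (aff q w) => k r; rewrite /aff_mul /=.
case=> H1 H2; have Hg : g1 = - k by lia.
subst g1; case: (eqVneq k 0) => [Hk|Hk].
  subst k; move: H2; rewrite oppr0 expr0z mul1r /= => H2.
  have -> : g2 = - r by lra.
  by rewrite oppr_gt0.
rewrite oppr_lt0 oppr_eq0 (negbTE Hk) /=.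
by rewrite ?andbF ?orbF ?andFb ?orbF.
Qed.
End PP.

Set Implicit Arguments. Unset Strict Implicit.

Inductive st := S0e | S0o | S1p | S1n | S2z | S2p | S2n | S3 | Fin.
Definition st_code (s : st) : nat := match s with S0e => 0 | S0o => 1 | S1p => 2 | S1n => 3 | S2z => 4 | S2p => 5 | S2n => 6 | S3 => 7 | Fin => 8 end%N.
Definition st_decode (n : nat) : option st := match n with 0 => Some S0e | 1 => Some S0o | 2 => Some S1p | 3 => Some S1n | 4 => Some S2z | 5 => Some S2p | 6 => Some S2n | 7 => Some S3 | 8 => Some Fin | _ => None end%N.
Lemma st_codeK : pcancel st_code st_decode. Proof. by case. Qed.
HB.instance Definition _ := Countable.copy st (pcan_type st_codeK).
Definition st_enum := [:: S0e; S0o; S1p; S1n; S2z; S2p; S2n; S3; Fin].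
Lemma st_enumP : Finite.axiom st_enum. Proof. by case. Qed.
HB.instance Definition _ := isFinite.Build st st_enumP.

Definition tr := (st * option letter * bool * st * nat)%type.

Definition common : seq tr := [::
 (S0e, Some LA, true, S0o, 1%N); (S0e, Some LA, false, S0o, 2%N);
 (S0o, Some LA, true, S0e, 1%N); (S0o, Some LA, false, S0e, 2%N);
 (S0e, Some Lb, true, S1p, 0%N); (S0e, Some Lb, false, S1p, 1%N);
 (S1p, Some Lb, true, S1p, 0%N); (S1p, Some Lb, false, S1p, 1%N);
 (S0e, Some LB, true, S1n, 0%N); (S0e, Some LB, false, S1n, 1%N);
 (S1n, Some LB, true, S1n, 0%N); (S1n, Some LB, false, S1n, 1%N);
 (S0e, None, true, S2z, 0%N); (S0e, None, false, S2z, 1%N);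
 (S1p, None, true, S2p, 0%N); (S1p, None, false, S2p, 1%N);
 (S1n, None, true, S2n, 0%N); (S1n, None, false, S2n, 1%N);
 (S2z, Some La, false, S2z, 0%N); (S2p, Some La, false, S2p, 0%N); (S2n, Some La, false, S2n, 0%N);
 (S2z, Some La, true, S3, 0%N); (S2p, Some La, true, S3, 0%N); (S2n, Some La, true, S3, 0%N);
 (S3, Some La, true, S3, 0%N)].

Definition gs (sip : bool) := if sip then S2p else S2n.

Definition final (sep sip : bool) : seq tr :=
  if sep then [:: (S3, None, true, Fin, 0%N); (gs sip, None, true, Fin, 0%N)]
  else [:: (S2z, None, false, Fin, 0%N); (S2p, None, false, Fin, 0%N);
           (S2n, None, false, Fin, 0%N); (gs sip, None, true, Fin, 0%N)].

Definition Aut (sep sip : bool) : OCA :=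
  {| oca_state := st; oca_init := S0e; oca_final := pred1 Fin;
     oca_trans := common ++ final sep sip |}.

Section Auto.
Variable q : int.
Hypothesis hq : q != 0.
Variables sep sip : bool.

Definition Inv (p : st) (c : nat) (u : word) : Prop :=
 match p with
 | S0e => u = nfw c 0 0 /\ ~~ odd c
 | S0o => u = nfw c 0 0 /\ odd c
 | S1p => exists n, u = nfw c n 0 /\ ~~ odd c /\ 0 < n
 | S1n => exists n, u = nfw c n 0 /\ ~~ odd c /\ n < 0
 | S2z => exists m n j, u = nfw m n j /\ (j + c = m)%N /\ ~~ odd m /\ n = 0
 | S2p => exists m n j, u = nfw m n j /\ (j + c = m)%N /\ ~~ odd m /\ 0 < n
 | S2n => exists m n j, u = nfw m n j /\ (j + c = m)%N /\ ~~ odd m /\ n < 0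
 | S3 => exists m n j, u = nfw m n j /\ (m < j)%N
 | Fin => Pg q sep sip u
 end.

Definition ow (x : option letter) : word := if x is Some y then [:: y] else [::].

Lemma nfw_A c : nfw c 0 0 ++ [:: LA] = nfw c.+1 0 0.
Proof. by rewrite /nfw /= !cats0 nseq_rcons. Qed.
Lemma nfw_b m n : 0 <= n -> nfw m n 0 ++ [:: Lb] = nfw m (n + 1) 0.
Proof.
move=> hn; have [k [Hk|Hk]] := int_cases n; last first.
  have -> : n = 0 by lia.
  by rewrite /nfw /= !cats0.
subst n; rewrite /nfw /= !cats0 -catA -PoszD !bpowP nseq_rcons addn1.
by [].
Qed.
Lemma nfw_B m n : n <= 0 -> nfw m n 0 ++ [:: LB] = nfw m (n - 1) 0.
Proof.
move=> hn; have [k [Hk|Hk]] := int_cases n.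
  have -> : n = 0 by lia.
  by rewrite /nfw /= !cats0.
subst n; rewrite /nfw /= !cats0 -catA -opprD -PoszD !bpowN nseq_rcons addn1.
by [].
Qed.
Lemma nfw_a m n j : nfw m n j ++ [:: La] = nfw m n j.+1.
Proof. by rewrite /nfw -!catA nseq_rcons. Qed.

Lemma eps_nfw m n j : eps (nfw m n j) = j%:Z - m%:Z.
Proof. by rewrite (eps_aff q) aff_nfw. Qed.

Lemma Qm_gt0 m : ~~ odd m -> 0 < (q%:~R : rat) ^ (- m%:Z).
Proof.
move=> hm; rewrite -exprnN invr_gt0 exprn_even_gt0 //.
by rewrite intr_eq0 hq orbT.
Qed.

Lemma iota_nfw m n j : Defs.iota q (nfw m n j) = (q%:~R : rat) ^ (- m%:Z) * n%:~R.
Proof. by rewrite /Defs.iota aff_nfw. Qed.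

Ltac prep := match goal with H : (?c == 0)%N = ?b |- _ =>
  destruct c; simpl in H; try discriminate H end; rewrite /=.
Ltac fin := repeat split; (try congr nfw); lia.

Lemma step_inv (p : st) c x (p' : st) c' u :
  @oca_step (Aut sep sip) p c x p' c' -> Inv p c u -> Inv p' c' (u ++ ow x).
Proof.
case=> n [Hin ->]; move E: (c == 0)%N Hin => z Hin.
rewrite mem_cat in Hin; case/orP: Hin => Hin; last first.
{ case Hs: sep Hin; case Hi: sip; rewrite /final /gs /= => Hin;
  repeat (case/predU1P: Hin => [[? ? ? ? ?]|Hin]; [subst => /=|]); try by [].
  all: prep.
  all: try (by case=> m [n0 [j [-> H]]]; rewrite cats0 /Pg Hs ?Hi eps_nfw; lia).
  all: case=> m [n0 [j [-> [Hj [Hm Hn]]]]]; rewrite cats0 /Pg Hs ?Hi eps_nfw iota_nfw.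
  all: try (rewrite pmulr_rgt0; last by apply: Qm_gt0).
  all: try (rewrite pmulr_rlt0; last by apply: Qm_gt0).
  all: rewrite ?ltr0z ?ltrz0; lia. }
  repeat (case/predU1P: Hin => [[? ? ? ? ?]|Hin]; [subst => /=|]); last by [].
  all: prep.
  - by case=> -> Hc'; rewrite nfw_A; fin.
  - by case=> -> Hc'; rewrite nfw_A; fin.
  - by case=> -> Hc'; rewrite nfw_A; fin.
  - by case=> -> Hc'; rewrite nfw_A; fin.
  - by case=> -> Hc'; exists 1; rewrite nfw_b //; fin.
  - by case=> -> Hc'; exists 1; rewrite nfw_b //; fin.
  - by case=> n0 [-> [Hc' Hn]]; exists (n0 + 1); rewrite nfw_b; [fin|lia].
  - by case=> n0 [-> [Hc' Hn]]; exists (n0 + 1); rewrite nfw_b; [fin|lia].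
  - by case=> -> Hc'; exists (-1); rewrite nfw_B //; fin.
  - by case=> -> Hc'; exists (-1); rewrite nfw_B //; fin.
  - by case=> n0 [-> [Hc' Hn]]; exists (n0 - 1); rewrite nfw_B; [fin|lia].
  - by case=> n0 [-> [Hc' Hn]]; exists (n0 - 1); rewrite nfw_B; [fin|lia].
  - by case=> -> Hc'; eexists _, 0, 0%N; rewrite cats0; fin.
  - by case=> -> Hc'; eexists _, 0, 0%N; rewrite cats0; fin.
  - by case=> n0 [-> [Hc' Hn]]; eexists _, n0, 0%N; rewrite cats0; fin.
  - by case=> n0 [-> [Hc' Hn]]; eexists _, n0, 0%N; rewrite cats0; fin.
  - by case=> n0 [-> [Hc' Hn]]; eexists _, n0, 0%N; rewrite cats0; fin.
  - by case=> n0 [-> [Hc' Hn]]; eexists _, n0, 0%N; rewrite cats0; fin.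
  all: try (by case=> m [n0 [j [-> [Hj [Hm Hn]]]]]; exists m, n0, j.+1; rewrite nfw_a; fin).
  all: try (by case=> m [n0 [j [-> Hj]]]; exists m, n0, j.+1; rewrite nfw_a; fin).
Qed.

Lemma reach_inv p c w r d : @oca_reach (Aut sep sip) p c w r d ->
  forall u, Inv p c u -> Inv r d (u ++ w).
Proof.
elim=> {p c w r d}.
- by move=> p c u; rewrite cats0.
- move=> p c p' c' w r d Hs _ IH u Hu.
  by have := IH _ (step_inv Hs Hu); rewrite /= cats0.
- move=> p c x p' c' w r d Hs _ IH u Hu.
  by have := IH _ (step_inv Hs Hu); rewrite /= -catA.
Qed.

Lemma accepts_sound w : oca_accepts (Aut sep sip) w -> Pg q sep sip w.
Proof.
case=> r [d [H Hf]].
have := reach_inv H (u := [::]) (conj erefl isT).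
by move: Hf; rewrite /= => /eqP ->.
Qed.

Lemma mk_step p c x p' c' k : (p, x, (c == 0)%N, p', k) \in common ->
  c' = (if c == 0 then k else c.-1 + k)%N -> @oca_step (Aut sep sip) p c x p' c'.
Proof. move=> H ->; exists k; split => //; have : (p, x, (c == 0)%N, p', k) \in common ++ final sep sip by rewrite mem_cat H. by []. Qed.

Lemma mk_stepF p c x p' c' k : (p, x, (c == 0)%N, p', k) \in final sep sip ->
  c' = (if c == 0 then k else c.-1 + k)%N -> @oca_step (Aut sep sip) p c x p' c'.
Proof. move=> H ->; exists k; split => //; have : (p, x, (c == 0)%N, p', k) \in common ++ final sep sip by rewrite mem_cat H orbT. by []. Qed.

Lemma reach_cat p c u r d v s e : @oca_reach (Aut sep sip) p c u r d ->
  @oca_reach (Aut sep sip) r d v s e -> @oca_reach (Aut sep sip) p c (u ++ v) s e.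
Proof.
elim=> {p c u r d} //.
- by move=> p c p' c' w r d Hs _ IH H; apply: reach_eps Hs (IH H).
- by move=> p c x p' c' w r d Hs _ IH H; apply: reach_read Hs (IH H).
Qed.

Definition par c := if odd c then S0o else S0e.

Lemma R0 k c : @oca_reach (Aut sep sip) (par c) c (nseq k LA) (par (c + k)) (c + k).
Proof.
elim: k c => [|k IH] c; first by rewrite addn0; apply: reach_refl.
rewrite -addSnnS; apply: reach_read (IH c.+1).
apply: (mk_step (k := if c == 0 then 1 else 2)%N).
  by case: c => [|c] //=; rewrite /par /=; case: (odd c).
by case: c => [|c] //=; lia.
Qed.


Local Notation reach := (@oca_reach (Aut sep sip)).

Lemma mk_stay p x p' c : (p, x, true, p', 0%N) \in common ->
  (p, x, false, p', 1%N) \in common -> @oca_step (Aut sep sip) p c x p' c.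
Proof.
move=> H0 H1; apply: (mk_step (k := if c == 0 then 0 else 1)%N).
  by case: c.
by case: c => [|c] //=; lia.
Qed.

Lemma Rstay p y k c : (p, Some y, true, p, 0%N) \in common ->
  (p, Some y, false, p, 1%N) \in common -> reach p c (nseq k y) p c.
Proof.
move=> H0 H1; elim: k => [|k IH]; first exact: reach_refl.
exact: reach_read (mk_stay _ H0 H1) IH.
Qed.

Lemma R2 X i c : (X, Some La, false, X, 0%N) \in common -> (i <= c)%N ->
  reach X c (nseq i La) X (c - i).
Proof.
move=> H; elim: i c => [|i IH] c hi; first by rewrite subn0; apply: reach_refl.
case: c hi => [//|c] hi; rewrite subSS.
apply: reach_read (IH c hi).
apply: (mk_step (k := 0%N)); first exact: H.
by rewrite /= addn0.
Qed.

Lemma R3 i : reach S3 0 (nseq i La) S3 0.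
Proof.
elim: i => [|i IH]; first exact: reach_refl.
by apply: reach_read IH; apply: (mk_step (k := 0%N)).
Qed.


Definition Xof (n : int) := if n == 0 then S2z else if 0 < n then S2p else S2n.

Lemma head_run m n : ~~ odd m -> reach S0e 0 (nseq m LA ++ bpow n) (Xof n) m.
Proof.
move=> hm; have H0 := R0 m 0; rewrite add0n /par (negbTE hm) /= in H0.
apply: reach_cat H0 _.
have [k [->|->]] := int_cases n.
- case: k => [|k].
    by apply: reach_eps _ (reach_refl _ _); apply: mk_stay.
  rewrite bpowP /Xof /=.
  apply: reach_read (mk_stay (p' := S1p) _ _ _) _ => //.
  rewrite -[nseq k Lb]cats0; apply: reach_cat (Rstay _ _ _ _) _ => //.
  by apply: reach_eps _ (reach_refl _ _); apply: mk_stay.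
- case: k => [|k].
    by apply: reach_eps _ (reach_refl _ _); apply: mk_stay.
  rewrite bpowN /Xof /=.
  apply: reach_read (mk_stay (p' := S1n) _ _ _) _ => //.
  rewrite -[nseq k LB]cats0; apply: reach_cat (Rstay _ _ _ _) _ => //.
  by apply: reach_eps _ (reach_refl _ _); apply: mk_stay.
Qed.

Lemma tail' X m j :
  (X, Some La, false, X, 0%N) \in common ->
  (X, Some La, true, S3, 0%N) \in common ->
  (~~ sep -> (X, None, false, Fin, 0%N) \in final sep sip) ->
  (X == gs sip -> (X, None, true, Fin, 0%N) \in final sep sip) ->
  [|| sep && (m < j)%N, ~~ sep && (j < m)%N | (j == m) && (X == gs sip)] ->
  exists d, reach X m (nseq j La) Fin d.
Proof.
move=> H1 H2 H3 H4 hc.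
case: (ltngtP m j) => h.
- have Hs : sep by move: hc; case: sep => //=; rewrite ltnNge (ltnW h) (gtn_eqF h).
  have Hj : j = (m + (j - m).-1.+1)%N by lia.
  rewrite Hj.
  rewrite nseqD /=; exists 0%N.
  have := R2 H1 (leqnn m); rewrite subnn => HR.
  apply: reach_cat HR _.
  apply: reach_read (mk_step (p:=X) (c:=0%N) (x:=Some La) (p':=S3) (c':=0%N) (k := 0%N) H2 erefl) _.
  rewrite -[nseq _ La]cats0; apply: reach_cat (R3 _) _.
  apply: reach_eps (mk_stepF (p:=S3) (c:=0%N) (x:=None) (p':=Fin) (c':=0%N) (k:=0%N) _ erefl) (reach_refl _ _).
  by rewrite /final Hs mem_head.
- have Hs : ~~ sep by move: hc; case: sep => //=; rewrite ltnNge (ltnW h) (ltn_eqF h).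
  exists (m - j).-1; rewrite -[nseq _ La]cats0.
  apply: reach_cat (R2 H1 (ltnW h)) _.
  have Hz : (m - j == 0)%N = false by rewrite subn_eq0 leqNgt h.
  apply: reach_eps (mk_stepF (p:=X) (c:=(m-j)%N) (x:=None) (p':=Fin) (c':=(m-j).-1) (k:=0%N) _ _) (reach_refl _ _).
  + by rewrite Hz; apply: H3.
  + by rewrite Hz addn0.
- subst j; have HX : X == gs sip by move: hc; rewrite eqxx /=; case: sep => /=; rewrite ?ltnn.
  exists 0%N; rewrite -[nseq _ La]cats0.
  have := R2 H1 (leqnn m); rewrite subnn => HR.
  apply: reach_cat HR _.
  exact: reach_eps (mk_stepF (p:=X) (c:=0%N) (x:=None) (p':=Fin) (c':=0%N) (k:=0%N) (H4 HX) erefl) (reach_refl _ _).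
Qed.

Lemma tailX X m j : X \in [:: S2z; S2p; S2n] ->
  [|| sep && (m < j)%N, ~~ sep && (j < m)%N | (j == m) && (X == gs sip)] ->
  exists d, reach X m (nseq j La) Fin d.
Proof.
rewrite !inE => /or3P [] /eqP -> hc; apply: tail' hc => //; by case: sep; case: sip.
Qed.

Lemma complete m n j : ~~ odd m -> Pg q sep sip (nfw m n j) ->
  oca_accepts (Aut sep sip) (nfw m n j).
Proof.
move=> hm HP.
have hc : [|| sep && (m < j)%N, ~~ sep && (j < m)%N | (j == m) && (Xof n == gs sip)].
  move: HP; rewrite /Pg eps_nfw iota_nfw pmulr_rgt0 ?Qm_gt0 // pmulr_rlt0 ?Qm_gt0 // ltr0z ltrz0 /Xof /gs.
  case: (ltgtP n 0) => hn /=; case: sep; case: sip => /=; rewrite ?[(S2n == S2p)]/(false) ?[(S2p == S2n)]/(false) ?[(S2z == S2p)]/(false) ?[(S2z == S2n)]/(false) ?eqxx; lia.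
have HX : Xof n \in [:: S2z; S2p; S2n] by rewrite /Xof; case: ifP => _; [|case: ifP].
have [d Hd] := tailX HX hc.
exists Fin, d; split; last by rewrite /= eqxx.
rewrite /nfw catA; exact: reach_cat (head_run n hm) Hd.
Qed.

End Auto.

Unset Implicit Arguments.

Section Main.
Variable q : int.
Hypothesis hq : q != 0.

Lemma image_Pg sep sip : image_is q (oca_accepts (Aut sep sip)) (Pg q sep sip).
Proof.
move=> w; split.
  case=> w' Hacc Heq; rewrite -(@Pg_bs q hq sep sip _ _ Heq); exact: accepts_sound Hacc.
move=> HP; have [m [n [j [hm H]]]] := nf_even q w.
exists (nfw m n j); last exact: bs_sym H.
apply: (@complete q hq sep sip m n j hm). by rewrite -(@Pg_bs q hq sep sip _ _ H).
Qed.

Lemma image_ext (L : word -> Prop) (P P' : word -> bool) :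
  (forall w, P w = P' w) -> image_is q L P' -> image_is q L P.
Proof. by move=> E H w; rewrite E; apply: H. Qed.

Lemma oc_Aut sep sip : one_counter (oca_accepts (Aut sep sip)).
Proof. by exists (Aut sep sip). Qed.
End Main.

Theorem proposition3p8 (q : int) (hq : q != 0) :
  (exists L : word -> Prop, one_counter L /\ image_is q L (P1 q)) /\
  (exists L : word -> Prop, one_counter L /\ image_is q L (P2 q)) /\
  (exists L : word -> Prop, one_counter L /\ image_is q L (P3 q)) /\
  (exists L : word -> Prop, one_counter L /\ image_is q L (P4 q)).
Proof.
split; [|split; [|split]].
- exists (oca_accepts (Aut true true)); split; first exact: oc_Aut.
  exact: (image_Pg q hq true true).
- exists (oca_accepts (Aut false true)); split; first exact: oc_Aut.
  exact: (image_Pg q hq false true).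
- exists (oca_accepts (Aut false false)); split; first exact: oc_Aut.
  apply: (@image_ext q _ _ (Pg q false false)); first exact: P3E q hq.
  exact: (image_Pg q hq false false).
- exists (oca_accepts (Aut true false)); split; first exact: oc_Aut.
  apply: (@image_ext q _ _ (Pg q true false)); first exact: P4E q hq.
  exact: (image_Pg q hq true false).
Qed.
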